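(* Let $F=\{\mathbb{R}^{n};f_{1},\dots,f_{m}\}$ be an IFS of contractive similitudes (at least two distinct maps) that obeys the open set condition, with contraction factors $\lambda_i=s^{a_i}$ where $s=\max_i\lambda_i$. Suppose $a_{i}\in\mathbb{N}$ and the costs are $c_{i}=a_{i}$ for all $i=1,\dots,m$. Then for every closed $T\subset\mathbb{R}^n$ and every $\mathbf{i}\in\Sigma^{\infty}$ the tiling $\Pi_{T}(\mathbf{i})$ is commensurate; in particular $\Pi(\mathbf{i})=\Pi_A(\mathbf{i})$ and $\Xi(\mathbf{i})=\Pi_{\overline{C}}(\mathbf{i})$ are commensurate.
   Context: An IFS $F$ consists of maps $f_{i}:\mathbb{R}^{n}\to\mathbb{R}^{n}$ with $|f_{i}(x)-f_{i}(y)|=\lambda_{i}|x-y|$, $\lambda_{i}\in(0,1)$; its attractor $A$ is the unique nonempty compact set with $A=\bigcup_i f_i(A)$. $F$ obeys the open set condition if there is a nonempty open $O$ with $f_i(O)\subset O$ for all $i$ and $f_{i}(O)\cap f_{j}(O)=\emptyset$ for $i\neq j$. Let $\Sigma=\{1,\dots,m\}$, $\Sigma^{*}$ the nonempty finite words, $\Sigma^{\infty}$ the infinite sequences; $f_{\mathbf{i}}=f_{i_{1}}\circ\cdots\circ f_{i_{k}}$ for a word. The central open set is $C=\{x:d(x,A)<d(x,H)\}$ where $H=\bigcup\{f_{\mathbf{i}}^{-1}f_{\mathbf{j}}(A):\mathbf{i},\mathbf{j}\in\Sigma^{*},i_1\neq j_1\}$ and $d(x,Y)=\inf_{y\in Y}|x-y|$.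 For $\mathbf{i}\in\Sigma^{\infty}$: $\mathbf{i}|k=i_{1}\dots i_{k}$, $\mathbf{i}|0=\emptyset$, $f_{(\mathbf{j}|l)}=f_{j_{1}}\circ\cdots\circ f_{j_{l}}$, $f_{-(\mathbf{i}|k)}=f_{i_{1}}^{-1}\circ\cdots\circ f_{i_{k}}^{-1}$, $c(\mathbf{i}|k)=c_{i_{1}}+\cdots+c_{i_{k}}$, $c(\emptyset)=0$; \[ \Pi_{T}(\mathbf{i}|k)=f_{-(\mathbf{i}|k)}\big(\{f_{(\mathbf{j}|l)}(T):\mathbf{j}\in\Sigma^{\infty},\ l\in\mathbb{N},\ c(\mathbf{j}|l-1)\leq c(\mathbf{i}|k)<c(\mathbf{j}|l)\}\big),\quad \Pi_{T}(\mathbf{i})=\bigcup_{k\geq1}\Pi_{T}(\mathbf{i}|k). \] Each tile of $\Pi_T(\mathbf{i})$ is an image of $T$ under a similitude; its size is measured relative to $T$ by the similarity ratio. A tiling is commensurate if the sizes of all its tiles belong to a geometric progression. *)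

(* Defs.v *)
From mathcomp Require Import all_boot all_order all_algebra.
From mathcomp Require Import reals.
Set Implicit Arguments. Unset Strict Implicit. Unset Printing Implicit Defensive.
Import Order.TTheory GRing.Theory Num.Theory.
Local Open Scope ring_scope.

Section Defs.
Variables (R : realType) (n : nat).

Notation V := 'rV[R]_n.

Definition enorm (x : V) : R := Num.sqrt (\sum_(t < n) (x 0 t) ^+ 2).
Definition edist (x y : V) : R := enorm (x - y).

Definition similitude_ratio (g : V -> V) (r : R) : Prop :=
  forall x y, edist (g x) (g y) = r * edist x y.

Definition is_open (O : V -> Prop) : Prop :=
  forall x, O x -> exists2 e : R, 0 < e & forall y, edist x y < e -> O y.
Definition is_closed (T : V -> Prop) : Prop := is_open (fun x => ~ T x).

Definition img (g : V -> V) (X : V -> Prop) : V -> Prop :=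
  fun y => exists2 x, X x & y = g x.

Definition OSC (m : nat) (f : 'I_m -> V -> V) : Prop :=
  exists O : V -> Prop, is_open O /\ (exists x, O x) /\
    (forall i y, img (f i) O y -> O y) /\
    (forall i j, i != j -> forall y, img (f i) O y -> img (f j) O y -> False).

(* f_{j|l} = f_{j_1} o ... o f_{j_l}  (sequences are 0-indexed: j 0 = j_1) *)
Definition compw (m : nat) (f : 'I_m -> V -> V) (j : nat -> 'I_m) (l : nat)
  (x : V) : V := foldr (fun t acc => f (j t) acc) x (iota 0 l).

Definition costw (m : nat) (c : 'I_m -> R) (j : nat -> 'I_m) (l : nat) : R :=
  \sum_(t < l) c (j t).

(* The tiles of Pi_T(i), each given with its similitude g, the tile being g(T):
   g = f_{-(i|k)} o f_{(j|l)} with k >= 1 and c(j|l-1) <= c(i|k) < c(j|l).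
   Since f_{i|k} is injective, g = f_{-(i|k)} o f_{(j|l)} is characterized by
   f_{i|k} o g = f_{j|l}. *)
Definition tile_maps (m : nat) (f : 'I_m -> V -> V) (c : 'I_m -> R)
  (i : nat -> 'I_m) : (V -> V) -> Prop :=
  fun g => exists (k l : nat) (j : nat -> 'I_m),
    [/\ (1 <= k)%N,
        costw c j l.-1 <= costw c i k,
        costw c i k < costw c j l &
        forall x, compw f i k (g x) = compw f j l x].

Definition tiling (m : nat) (f : 'I_m -> V -> V) (c : 'I_m -> R)
  (T : V -> Prop) (i : nat -> 'I_m) : (V -> Prop) -> Prop :=
  fun t => exists2 g, tile_maps f c i g & t = img g T.

(* Pi_T(i) is commensurate: the sizes (similarity ratios relative to T) of all
   its tiles belong to a geometric progression b * theta^e, e in nat,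
   with 0 < theta < 1 and b > 0. *)
Definition commensurate (m : nat) (f : 'I_m -> V -> V) (c : 'I_m -> R)
  (T : V -> Prop) (i : nat -> 'I_m) : Prop :=
  exists (b theta : R), [/\ 0 < b, 0 < theta, theta < 1 &
    forall g, tile_maps f c i g ->
      exists e : nat, similitude_ratio g (b * theta ^+ e)].

End Defs.

(* Main.v *)
Require Import Defs.
From mathcomp Require Import all_boot all_order all_algebra.
From mathcomp Require Import reals.
Import Order.TTheory GRing.Theory Num.Theory.
Local Open Scope ring_scope.

Lemma compwS (R : realType) (n m : nat) (f : 'I_m -> 'rV[R]_n -> 'rV[R]_n) j l x :
  compw f j l.+1 x = compw f j l (f (j l) x).
Proof. rewrite /compw; have -> : iota 0 l.+1 = iota 0 l ++ [:: l] by rewrite -addn1 iotaD. by rewrite foldr_cat. Qed.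

Lemma compw_ratio (R : realType) (n m : nat) (f : 'I_m -> 'rV[R]_n -> 'rV[R]_n)
  (s : R) (a : 'I_m -> nat) :
  (forall i, similitude_ratio (f i) (s ^+ a i)) ->
  forall j l, similitude_ratio (compw f j l) (s ^+ (\sum_(t < l) a (j t))%N).
Proof.
move=> hf j; elim=> [|l IH] x y.
  by rewrite big_ord0 expr0 mul1r.
rewrite !compwS IH hf big_ord_recr /= exprD mulrA [_ * s ^+ _]mulrC.
done.
Qed.

Theorem theorem2 (R : realType) (n m : nat)
  (f : 'I_m -> 'rV[R]_n -> 'rV[R]_n) (lambda : 'I_m -> R) (s : R)
  (a : 'I_m -> nat) (c : 'I_m -> R) :
  (forall i, 0 < lambda i /\ lambda i < 1) ->
  (forall i, similitude_ratio (f i) (lambda i)) ->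
  (exists i j, f i <> f j) ->
  OSC f ->
  (forall i, lambda i <= s) -> (exists i, lambda i = s) ->
  (forall i, lambda i = s ^+ a i) ->
  (forall i, c i = (a i)%:R) ->
  forall (T : 'rV[R]_n -> Prop) (i : nat -> 'I_m),
    is_closed T -> commensurate f c T i.
Proof.
move=> hl hf _ _ _ [i0 hs] hla hc T i _.
have [s0 s1] : 0 < s /\ s < 1 by rewrite -hs; exact: hl.
have hf' : forall t, similitude_ratio (f t) (s ^+ a t).
  by move=> t; rewrite -hla.
have hcost : forall j l, costw c j l = (\sum_(t < l) a (j t))%N%:R.
  by move=> j l; rewrite /costw natr_sum; apply: eq_bigr => t _; rewrite hc.
exists 1, s; split => //.
move=> g [k [l [j [_ _ hlt hg]]]].
rewrite !hcost ltr_nat in hlt.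
set A := (\sum_(t < k) a (i t))%N in hlt *.
set B := (\sum_(t < l) a (j t))%N in hlt *.
exists (B - A)%N => x y; rewrite mul1r.
have cr := @compw_ratio _ _ _ f s a hf'.
have := cr i k (g x) (g y).
rewrite !hg cr -/A -/B.
have eB : s ^+ B = s ^+ (B - A) * s ^+ A by rewrite -exprD subnK // ltnW.
rewrite eB => h.
have hA : s ^+ A != 0 by rewrite expf_neq0 // (gt_eqF s0).
apply: (mulfI hA); rewrite -h mulrA [s ^+ A * _]mulrC; done.
Qed.
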